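(* For every pair of disjoint sets $A,B\subseteq\{0,1,2\}^n$, \[ |\partial A| + |\partial B| \ge 3^{-n}\,|A|\,|B|. \]
   Context: For $S\subseteq\{0,1,2\}^n$ and $1\le i\le n$, the upper edge border in direction $i$ is $\partial_i S=\{(v_{-i},v_i,v_i') : (v_{-i},v_i)\in S,\ (v_{-i},v_i')\notin S,\ v_i<v_i'\}$, where $v_i,v_i'\in\{0,1,2\}$ and $(v_{-i},t)$ denotes the vector agreeing with $v$ off coordinate $i$ and equal to $t$ at coordinate $i$. The upper edge border is $\partial S=\bigcup_i\partial_i S$ (a disjoint union), so $|\partial S|=\sum_i|\partial_i S|$. *)

(* Defs.v *)
From HB Require Import structures.
From mathcomp Require Import all_boot all_order all_algebra.
Set Implicit Arguments. Unset Strict Implicit. Unset Printing Implicit Defensive.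

Definition cube (n : nat) := {ffun 'I_n -> 'I_3}.

Definition setc n (v : cube n) (i : 'I_n) (t : 'I_3) : cube n :=
  [ffun j => if j == i then t else v j].

(* Upper edge border in direction i. The triple (v_{-i}, v_i, v_i') is
   encoded by the pair (v, v_i') : v determines v_{-i} and v_i. *)
Definition border_dir n (S : {set cube n}) (i : 'I_n) : {set cube n * 'I_3} :=
  [set p | [&& p.1 \in S, setc p.1 i p.2 \notin S & (p.1 i < p.2)%N]].

Definition border_card n (S : {set cube n}) : nat :=
  \sum_(i < n) #|border_dir S i|.

(* Main.v *)
Require Import Defs.
From HB Require Import structures.
From mathcomp Require Import all_boot all_order all_algebra zify.
Import Order.TTheory GRing.Theory Num.Theory.
Set Implicit Arguments. Unset Strict Implicit. Unset Printing Implicit Defensive.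

Lemma pw (N as_ at_ bs bt ya yb : nat) : as_ <= N -> at_ <= N -> bs <= N -> bt <= N ->
  as_ <= ya + at_ -> bs <= yb + bt ->
  as_ * bt + at_ * bs <= as_ * bs + at_ * bt + N * (ya + yb).
Proof.
move=> h1 h2 h3 h4 h5 h6.
case: (leqP as_ at_) => c1; case: (leqP bs bt) => c2;
  first [ nia
        | (have : (at_ - as_) * (bs - bt) <= N * yb by apply: leq_mul; lia); nia
        | (have : (as_ - at_) * (bt - bs) <= ya * N by apply: leq_mul; lia); nia ].
Qed.

Lemma arith (N a0 a1 a2 b0 b1 b2 xA0 xA1 xA2 xB0 xB1 xB2 DA DB yA01 yA02 yA12 yB01 yB02 yB12 : nat) :
  a0 <= N -> a1 <= N -> a2 <= N -> b0 <= N -> b1 <= N -> b2 <= N ->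
  a0 * b0 <= N * (xA0 + xB0) -> a1 * b1 <= N * (xA1 + xB1) -> a2 * b2 <= N * (xA2 + xB2) ->
  a0 <= yA01 + a1 -> a0 <= yA02 + a2 -> a1 <= yA12 + a2 ->
  b0 <= yB01 + b1 -> b0 <= yB02 + b2 -> b1 <= yB12 + b2 ->
  yA01 + yA02 + yA12 <= DA -> yB01 + yB02 + yB12 <= DB ->
  (a0 + a1 + a2) * (b0 + b1 + b2) <= 3 * N * ((xA0 + xA1 + xA2 + DA) + (xB0 + xB1 + xB2 + DB)).
Proof.
move=> *.
have p1 := @pw N a0 a1 b0 b1 yA01 yB01.
have p2 := @pw N a0 a2 b0 b2 yA02 yB02.
have p3 := @pw N a1 a2 b1 b2 yA12 yB12.
have q1 : N * (yA01 + yB01 + (yA02 + yB02) + (yA12 + yB12)) <= N * (DA + DB) by apply: leq_mul; lia.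
nia.
Qed.

Definition Cs n (k : nat) (v : cube n) : {set cube n} :=
  [set u : cube n | [forall j : 'I_n, (k <= j)%N ==> (u j == v j)]].
Definition bdir n (S : {set cube n}) (i : 'I_n) (X : {set cube n}) :=
  #|[set p in border_dir S i | p.1 \in X]|.
Definition bk n (S : {set cube n}) k v := \sum_(i < n | (i < k)%N) bdir S i (Cs k v).

Lemma L1 (T : finType) (X : {set T}) (f : T -> 'I_3) :
  #|X| = \sum_(s < 3) #|[set x in X | f x == s]|.
Proof.
rewrite -sum1_card (partition_big f xpredT) //=.
apply: eq_bigr => s _; rewrite -sum1_card; apply: eq_bigl => x; by rewrite inE.
Qed.

Lemma C_split n k v (K : 'I_n) (s : 'I_3) : val K = k -> forall u,
  (u \in Cs k (setc v K s)) = (u \in Cs k.+1 v) && (u K == s).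
Proof.
move=> hK u; rewrite !inE; apply/forallP/andP.
- move=> H; split.
  + apply/forallP => j; apply/implyP => hj.
    have := implyP (H j) (ltnW hj); rewrite ffunE.
    have -> : (j == K) = false by apply/negbTE; apply/eqP => e; move: hj; rewrite e hK ltnn.
    by [].
  + have hKk : (k <= K)%N by rewrite hK.
    by have := implyP (H K) hKk; rewrite ffunE eqxx.
- case=> /forallP H /eqP hs j; apply/implyP => hj; rewrite ffunE.
  case: (j =P K) => [->|ne]; first by rewrite hs.
  apply: (implyP (H j)); rewrite ltn_neqAle hj andbT -hK.
  by apply/eqP => e; apply: ne; apply/val_inj.
Qed.

Lemma bdir_split n (S : {set cube n}) i k (K : 'I_n) v : val K = k ->
  bdir S i (Cs k.+1 v) = \sum_(s < 3) bdir S i (Cs k (setc v K s)).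
Proof.
move=> hK; rewrite /bdir (L1 _ (fun p : cube n * 'I_3 => p.1 K)); apply: eq_bigr => s _.
apply: eq_card => p; rewrite in_set [X in _ = X]in_set (C_split _ _ hK) in_set andbA.
by [].
Qed.

Lemma cnt_split n (S : {set cube n}) k (K : 'I_n) v : val K = k ->
  #|S :&: Cs k.+1 v| = \sum_(s < 3) #|S :&: Cs k (setc v K s)|.
Proof.
move=> hK; rewrite (L1 _ (fun u : cube n => u K)); apply: eq_bigr => s _.
apply: eq_card => p; rewrite in_set [X in _ = X]in_setI (C_split _ _ hK) in_setI andbA.
by [].
Qed.

Lemma bk_split n (S : {set cube n}) k (K : 'I_n) v : val K = k ->
  bk S k.+1 v = \sum_(s < 3) bk S k (setc v K s) + bdir S K (Cs k.+1 v).
Proof.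
move=> hK; rewrite /bk (bigD1 K) /=; last by rewrite hK.
rewrite addnC; congr (_ + _).
transitivity (\sum_(i < n | (i < k)%N) \sum_(s < 3) bdir S i (Cs k (setc v K s))).
  apply: eq_big => i; last by move=> _; exact: bdir_split.
  rewrite ltnS ltn_neqAle andbC -hK; by [].
by rewrite exchange_big.
Qed.

Definition o0 : 'I_3 := @Ordinal 3 0 isT.
Definition o1 : 'I_3 := @Ordinal 3 1 isT.
Definition o2 : 'I_3 := @Ordinal 3 2 isT.

Lemma sum3 (F : 'I_3 -> nat) : \sum_(s < 3) F s = F o0 + F o1 + F o2.
Proof.
rewrite !big_ord_recr big_ord0 /= add0n.
by congr (_ + _ + _); congr F; apply/val_inj.
Qed.

Lemma setcK n (u : cube n) i s t : setc (setc u i t) i s = setc u i s.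
Proof. by apply/ffunP => j; rewrite !ffunE; case: (j == i). Qed.

Lemma setc_id n (u : cube n) i : setc u i (u i) = u.
Proof. by apply/ffunP => j; rewrite !ffunE; case: (j =P i) => [->|]. Qed.

Lemma setc_C n (u v : cube n) k (K : 'I_n) t : val K = k ->
  u \in Cs k.+1 v -> setc u K t \in Cs k.+1 v.
Proof.
move=> hK; rewrite !inE => /forallP H; apply/forallP => j; apply/implyP => hj.
rewrite ffunE; have -> : (j == K) = false.
  by apply/negbTE; apply/eqP => e; move: hj; rewrite e hK ltnn.
exact: (implyP (H j)).
Qed.

Definition Yst n (S : {set cube n}) k (K : 'I_n) v (s t : 'I_3) :=
  [set p in border_dir S K | (p.1 \in Cs k (setc v K s)) && (p.2 == t)].

Lemma bdir_Y n (S : {set cube n}) k (K : 'I_n) v : val K = k ->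
  bdir S K (Cs k.+1 v) = \sum_(s < 3) \sum_(t < 3) #|Yst S k K v s t|.
Proof.
move=> hK; rewrite (bdir_split _ _ _ hK); apply: eq_bigr => s _.
rewrite /bdir (L1 _ (fun p : cube n * 'I_3 => p.2)); apply: eq_bigr => t _.
apply: eq_card => p; rewrite in_set [X in _ = X]in_set in_set andbA; by [].
Qed.

Lemma Y_bound n (S : {set cube n}) k (K : 'I_n) v (s t : 'I_3) : val K = k ->
  (s < t)%N ->
  #|S :&: Cs k (setc v K s)| <= #|Yst S k K v s t| + #|S :&: Cs k (setc v K t)|.
Proof.
move=> hK st.
have sub : S :&: Cs k (setc v K s) \subset
   (fst @: Yst S k K v s t) :|: ((fun w => setc w K s) @: (S :&: Cs k (setc v K t))).
  apply/subsetP => u; rewrite in_setI => /andP [uS uC].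
  have uC' := uC; rewrite (C_split _ _ hK) in uC'; case/andP: uC' => uC1 /eqP uK.
  case hw: (setc u K t \in S).
  - apply/setUP; right; apply/imsetP; exists (setc u K t).
      by rewrite in_setI hw (C_split _ _ hK) (setc_C _ hK uC1) ffunE !eqxx.
    by rewrite setcK -uK setc_id.
  - apply/setUP; left; apply/imsetP; exists (u, t) => //.
    by rewrite in_set /= uC eqxx andbT in_set /= uS hw uK st.
apply: leq_trans (subset_leq_card sub) _.
apply: leq_trans (leq_of_leqif (leq_card_setU _ _)) _.
by apply: leq_add; apply: leq_imset_card.
Qed.

Lemma C0_eq n (v u : cube n) : u \in Cs 0 v -> u = v.
Proof.
rewrite inE => /forallP H; apply/ffunP => j.
by move/implyP: (H j) => /(_ (leq0n _)) /eqP.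
Qed.

Lemma Ccard n : forall k, (k <= n)%N -> forall v : cube n, #|setT :&: Cs k v| <= 3 ^ k.
Proof.
elim=> [|k IH] hk v.
- have sub : setT :&: Cs 0 v \subset [set v].
    by apply/subsetP => u; rewrite in_setI => /andP [_ /C0_eq ->]; rewrite in_set1.
  by apply: leq_trans (subset_leq_card sub) _; rewrite cards1 expn0.
- pose K := Ordinal hk; have hK : val K = k by [].
  rewrite (cnt_split _ _ hK) sum3 expnS.
  have := IH (ltnW hk) (setc v K o0); have := IH (ltnW hk) (setc v K o1);
  have := IH (ltnW hk) (setc v K o2); lia.
Qed.

Lemma mainL n (A B : {set cube n}) : [disjoint A & B] -> forall k, (k <= n)%N -> forall v,
  #|A :&: Cs k v| * #|B :&: Cs k v| <= 3 ^ k * (bk A k v + bk B k v).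
Proof.
move=> hAB; elim=> [|k IH] hk v.
- have [->|[u hu]] := set_0Vmem (A :&: Cs 0 v); first by rewrite cards0.
  have [->|[w hw]] := set_0Vmem (B :&: Cs 0 v); first by rewrite cards0 muln0.
  move: hu hw; rewrite !in_setI => /andP [uA uC] /andP [wB wC].
  by move: (C0_eq uC) (C0_eq wC) uA wB => -> -> vA; rewrite (disjointFr hAB vA).
- pose K := Ordinal hk; have hK : val K = k by [].
  have IH' := IH (ltnW hk).
  have bnd : forall (S : {set cube n}) w, #|S :&: Cs k w| <= 3 ^ k.
    move=> S w; apply: leq_trans (Ccard (ltnW hk) w).
    by apply: subset_leq_card; apply: setSI; apply: subsetT.
  rewrite (cnt_split A _ hK) (cnt_split B _ hK) (bk_split A _ hK) (bk_split B _ hK).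
  rewrite !(bdir_Y _ _ hK) !sum3 expnS.
  apply: arith; try exact: IH'; try exact: bnd;
    try (apply: Y_bound; [exact: hK | by []]); try lia.
Qed.

Local Open Scope ring_scope.

Theorem proposition3p5 (n : nat) (A B : {set cube n}) :
  [disjoint A & B] ->
  ((3 ^ n)%:R)^-1 * (#|A|)%:R * (#|B|)%:R
    <= ((border_card A + border_card B)%N)%:R :> rat.
Proof.
move=> hAB.
pose v : cube n := [ffun => ord0].
have Cn : Cs n v = setT.
  by apply/setP => u; rewrite !inE; apply/forallP => j; rewrite leqNgt ltn_ord.
have bkn : forall S : {set cube n}, bk S n v = border_card S.
  move=> S; rewrite /bk /border_card; apply: eq_big => [i|i _]; first by rewrite ltn_ord.
  by rewrite /bdir Cn; apply: eq_card => p; rewrite in_set in_setT andbT.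
have := mainL hAB (leqnn n) v; rewrite !bkn Cn !setIT => H.
rewrite -mulrA ler_pdivrMl ?ltr0n ?expn_gt0 // -!natrM ler_nat.
by [].
Qed.
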